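(* Let $P$ be a poset with an $\mathbb{R}$-action $\Lambda$, and let $I$ be an interval of $P$. Then for every $\epsilon\ge0$: - $I\subseteq\mathrm{Ex}^\Lambda_\epsilon(I)$; - $\mathrm{Ex}^\Lambda_\epsilon(I)$ is an interval of $P$.
   Context: An interval of a poset $P$ is a nonempty subset $I$ that is convex ($p,q\in I$, $r\in P$, $p\le r\le q$ imply $r\in I$) and connected (any two elements of $I$ are joined by a finite sequence of elements of $I$ with consecutive ones comparable). For $A\subseteq P$ nonempty, $A^\uparrow=\{p\in P:\exists a\in A,\ a\le p\}$ and $A^\downarrow=\{p\in P:\exists a\in A,\ p\le a\}$; by convention $\emptyset^\uparrow=\emptyset^\downarrow=P$. An $\mathbb{R}$-action on $P$ is a family $\{\Lambda_\epsilon\}_{\epsilon\ge0}$ of poset automorphisms of $P$ such that: - $p\le\Lambda_\epsilon(p)$ for all $p$; - $\Lambda_0=\mathrm{id}$; - $\Lambda_\epsilon\circ\Lambda_\zeta=\Lambda_{\epsilon+\zeta}$. The $\Lambda_\epsilon$-thickening of $A\subseteq P$ is $\mathrm{Ex}^\Lambda_\epsilon(A)=\Lambda_\epsilon^{-1}(A)^\uparrow\cap\Lambda_\epsilon(A)^\downarrow$, where $\Lambda_\epsilon^{-1}(A)$ denotes the preimage. *)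

(* Defs.v *)
From Stdlib Require Import Reals.
Open Scope R_scope.

Definition is_partial_order {P : Type} (le : P -> P -> Prop) : Prop :=
  (forall p, le p p) /\
  (forall p q, le p q -> le q p -> p = q) /\
  (forall p q r, le p q -> le q r -> le p r).

Definition poset_automorphism {P : Type} (le : P -> P -> Prop) (f : P -> P) : Prop :=
  (exists g : P -> P, (forall p, g (f p) = p) /\ (forall p, f (g p) = p)) /\
  (forall p q, le p q <-> le (f p) (f q)).

(* R-action: a family of automorphisms indexed by eps >= 0
   (Lambda eps is only constrained for eps >= 0). *)
Definition R_action {P : Type} (le : P -> P -> Prop) (Lambda : R -> P -> P) : Prop :=
  (forall eps, 0 <= eps -> poset_automorphism le (Lambda eps)) /\
  (forall eps p, 0 <= eps -> le p (Lambda eps p)) /\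
  (forall p, Lambda 0 p = p) /\
  (forall eps zeta p, 0 <= eps -> 0 <= zeta ->
     Lambda eps (Lambda zeta p) = Lambda (eps + zeta) p).

Definition nonempty {P : Type} (A : P -> Prop) : Prop := exists p, A p.

Definition convex {P : Type} (le : P -> P -> Prop) (A : P -> Prop) : Prop :=
  forall p q r, A p -> A q -> le p r -> le r q -> A r.

Definition comparable {P : Type} (le : P -> P -> Prop) (p q : P) : Prop :=
  le p q \/ le q p.

Inductive zigzag {P : Type} (le : P -> P -> Prop) (A : P -> Prop) : P -> P -> Prop :=
  | zigzag_refl : forall p, A p -> zigzag le A p p
  | zigzag_step : forall p q r, A p -> comparable le p q -> zigzag le A q r ->
                  zigzag le A p r.

Definition connected {P : Type} (le : P -> P -> Prop) (A : P -> Prop) : Prop :=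
  forall p q, A p -> A q -> zigzag le A p q.

Definition is_interval {P : Type} (le : P -> P -> Prop) (I : P -> Prop) : Prop :=
  nonempty I /\ convex le I /\ connected le I.

(* Up- and down-closures, with the convention emptyset^up = emptyset^down = P. *)
Definition upset {P : Type} (le : P -> P -> Prop) (A : P -> Prop) : P -> Prop :=
  fun p => (~ nonempty A) \/ (exists a, A a /\ le a p).
Definition downset {P : Type} (le : P -> P -> Prop) (A : P -> Prop) : P -> Prop :=
  fun p => (~ nonempty A) \/ (exists a, A a /\ le p a).

Definition preimage {P : Type} (f : P -> P) (A : P -> Prop) : P -> Prop :=
  fun p => A (f p).
Definition image {P : Type} (f : P -> P) (A : P -> Prop) : P -> Prop :=
  fun p => exists a, A a /\ f a = p.

Definition thickening {P : Type} (le : P -> P -> Prop) (Lambda : R -> P -> P)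
    (eps : R) (A : P -> Prop) : P -> Prop :=
  fun p => upset le (preimage (Lambda eps) A) p /\ downset le (image (Lambda eps) A) p.

(* Main.v *)
Require Import Defs.
From Stdlib Require Import Reals.
Open Scope R_scope.

Lemma zz_app {P : Type} (le : P -> P -> Prop) (A : P -> Prop) x y z :
  zigzag le A x y -> zigzag le A y z -> zigzag le A x z.
Proof.
  induction 1; intros Hz; auto. eapply zigzag_step; eauto.
Qed.

Lemma zz_mono {P : Type} (le : P -> P -> Prop) (A B : P -> Prop) x y :
  (forall p, A p -> B p) -> zigzag le A x y -> zigzag le B x y.
Proof.
  intros HAB; induction 1. constructor; auto. eapply zigzag_step; eauto.
Qed.

Theorem proposition2p11 (P : Type) (le : P -> P -> Prop) (Lambda : R -> P -> P)
  (I : P -> Prop) :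
  is_partial_order le -> R_action le Lambda -> is_interval le I ->
  forall eps : R, 0 <= eps ->
    (forall p, I p -> thickening le Lambda eps I p) /\
    is_interval le (thickening le Lambda eps I).
Proof.
  intros [Hrefl [Hanti Htrans]] [Haut [Hinc _]] [[i0 Hi0] [Hconv Hconn]] eps Heps.
  destruct (Haut eps Heps) as [[g [Hg1 Hg2]] Hmon].
  set (L := Lambda eps) in *.
  assert (Hinc' : forall p, le p (L p)) by (intro; apply Hinc; exact Heps).
  assert (Hne1 : nonempty (preimage L I)) by (exists (g i0); unfold preimage; rewrite Hg2; auto).
  assert (Hne2 : nonempty (image L I)) by (exists (L i0); exists i0; auto).
  assert (Hsub : forall p, I p -> thickening le Lambda eps I p).
  { intros p Hp; split; right.
    - exists (g p); split; unfold preimage; [rewrite Hg2; auto|].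
      pattern p at 2; rewrite <- (Hg2 p); apply Hinc'.
    - exists (L p); split; [exists p; auto | apply Hinc']. }
  assert (Hwit : forall p, thickening le Lambda eps I p ->
     (exists a, I (L a) /\ le a p) /\ (exists b, I b /\ le p (L b))).
  { intros p [[H1|[a [Ha1 Ha2]]] [H2|[c [[b [Hb1 Hb2]] Hc]]]];
      try (exfalso; tauto); split; eauto.
    exists b; subst c; auto. }
  split; [exact Hsub|]. split; [exists i0; auto|]. split.
  - intros p q r Hp Hq Hpr Hrq. destruct Hp as [Hp _]. destruct Hq as [_ Hq]. split.
    + destruct Hp as [Hp|[a [Ha1 Ha2]]]; [left; auto | right; exists a; split; eauto].
    + destruct Hq as [Hq|[a [Ha1 Ha2]]]; [left; auto | right; exists a; split; eauto].
  - assert (Ha : forall a, I (L a) -> thickening le Lambda eps I a).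
    { intros a Ha; split; right.
      - exists a; split; auto.
      - exists (L (L a)); split; [exists (L a); auto|].
        eapply Htrans; apply Hinc'. }
    intros p q Hp Hq.
    destruct (Hwit p Hp) as [[a [Ha1 Ha2]] _].
    destruct (Hwit q Hq) as [[c [Hc1 Hc2]] _].
    eapply zigzag_step; [exact Hp | right; exact Ha2 |].
    eapply zigzag_step; [apply Ha; exact Ha1 | left; apply Hinc' |].
    apply zz_app with (y := L c); [apply (zz_mono le I); [exact Hsub | apply Hconn; auto]|].
    eapply zigzag_step; [apply Hsub; exact Hc1 | right; apply Hinc' |].
    eapply zigzag_step; [apply Ha; exact Hc1 | left; exact Hc2 |].
    constructor; exact Hq.
Qed.
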